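(* Let $M$ be a compact translating soliton with boundary in $\mathbb{H}^2\times\mathbb{R}$. Then the height function of $M$ cannot attain a local maximum at any interior point of $M$.
   Context: $\mathbb{H}^2\times\mathbb{R}$ carries the product metric $\langle\cdot,\cdot\rangle$ of the hyperbolic plane of curvature $-1$ and the real line; the height function is the projection onto $\mathbb{R}$ and $\partial_z$ its gradient. An oriented immersed surface $M$ with unit normal $\eta$ and mean curvature $H_M$ (half the trace of the second fundamental form with respect to $\eta$) is a translating soliton if $H_M=\langle\eta,\partial_z\rangle$ at every point. *)

(* Defs.v *)
From Stdlib Require Import Reals.
From Coquelicot Require Import Coquelicot.
Open Scope R_scope.

(* ---------- Model of H^2 x R ----------
   H^2 is the upper half-plane {(a,b) | b > 0} with metric (da^2+db^2)/b^2
   (curvature -1); the R factor has coordinate c (the height). *)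
Definition vec := (R * R * R)%type.
Definition v1 (w : vec) : R := fst (fst w).
Definition v2 (w : vec) : R := snd (fst w).
Definition v3 (w : vec) : R := snd w.

Definition gmet (p u w : vec) : R :=
  (v1 u * v1 w + v2 u * v2 w) / (v2 p ^ 2) + v3 u * v3 w.

(* Christoffel term Gamma(p)(u,w) of the Levi-Civita connection of H^2 x R:
   Gamma^a_{ab}=Gamma^a_{ba}=-1/b, Gamma^b_{aa}=1/b, Gamma^b_{bb}=-1/b,
   all others zero. *)
Definition christ (p u w : vec) : vec :=
  (( - (v1 u * v2 w + v2 u * v1 w) / v2 p,
     (v1 u * v1 w - v2 u * v2 w) / v2 p),
   0).

Definition dz : vec := (0, 0, 1).

Definition pd1 (f : R -> R -> R) (u v : R) : R := Derive (fun s => f s v) u.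
Definition pd2 (f : R -> R -> R) (u v : R) : R := Derive (fun t => f u t) v.

Definition open2 (U : R -> R -> Prop) : Prop :=
  forall u v, U u v -> exists r, 0 < r /\
    forall u' v', Rabs (u' - u) < r -> Rabs (v' - v) < r -> U u' v'.

Definition cont2 (f : R -> R -> R) (u v : R) : Prop :=
  forall eps, 0 < eps -> exists d, 0 < d /\
    forall u' v', Rabs (u' - u) < d -> Rabs (v' - v) < d ->
      Rabs (f u' v' - f u v) < eps.

Definition has_partials (f : R -> R -> R) (u v : R) : Prop :=
  ex_derive (fun s => f s v) u /\ ex_derive (fun t => f u t) v.

Definition C2_on (U : R -> R -> Prop) (f : R -> R -> R) : Prop :=
  forall u v, U u v ->
    has_partials f u v /\ has_partials (pd1 f) u v /\ has_partials (pd2 f) u v /\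
    cont2 f u v /\ cont2 (pd1 f) u v /\ cont2 (pd2 f) u v /\
    cont2 (pd1 (pd1 f)) u v /\ cont2 (pd2 (pd1 f)) u v /\
    cont2 (pd1 (pd2 f)) u v /\ cont2 (pd2 (pd2 f)) u v.

Definition comp1 (X : R -> R -> vec) : R -> R -> R := fun u v => v1 (X u v).
Definition comp2 (X : R -> R -> vec) : R -> R -> R := fun u v => v2 (X u v).
Definition comp3 (X : R -> R -> vec) : R -> R -> R := fun u v => v3 (X u v).

Definition vpd1 (X : R -> R -> vec) (u v : R) : vec :=
  (pd1 (comp1 X) u v, pd1 (comp2 X) u v, pd1 (comp3 X) u v).
Definition vpd2 (X : R -> R -> vec) (u v : R) : vec :=
  (pd2 (comp1 X) u v, pd2 (comp2 X) u v, pd2 (comp3 X) u v).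

Definition vadd (u w : vec) : vec := (v1 u + v1 w, v2 u + v2 w, v3 u + v3 w).

Definition immersion_on (U : R -> R -> Prop) (X : R -> R -> vec) : Prop :=
  C2_on U (comp1 X) /\ C2_on U (comp2 X) /\ C2_on U (comp3 X) /\
  (forall u v, U u v -> 0 < v2 (X u v)) /\
  (forall u v, U u v ->
     let a := vpd1 X u v in let b := vpd2 X u v in
     (v2 a * v3 b - v3 a * v2 b, v3 a * v1 b - v1 a * v3 b,
      v1 a * v2 b - v2 a * v1 b) <> (0, 0, 0)).

Definition unit_normal_on (U : R -> R -> Prop) (X N : R -> R -> vec) : Prop :=
  forall u v, U u v ->
    gmet (X u v) (N u v) (N u v) = 1 /\
    gmet (X u v) (N u v) (vpd1 X u v) = 0 /\
    gmet (X u v) (N u v) (vpd2 X u v) = 0 /\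
    cont2 (comp1 N) u v /\ cont2 (comp2 N) u v /\ cont2 (comp3 N) u v.

Definition cov (X : R -> R -> vec) (Xij Xi Xj : vec) (p : vec) : vec :=
  vadd Xij (christ p Xi Xj).

(* mean curvature = half the trace of the second fundamental form
   h_ij = < nabla_{X_i} X_j , N > with respect to the induced metric *)
Definition mean_curv (X N : R -> R -> vec) (u v : R) : R :=
  let p := X u v in
  let Xu := vpd1 X u v in let Xv := vpd2 X u v in
  let Xuu := vpd1 (vpd1 X) u v in
  let Xuv := vpd2 (vpd1 X) u v in
  let Xvv := vpd2 (vpd2 X) u v in
  let n := N u v in
  let E := gmet p Xu Xu in let F := gmet p Xu Xv in let G := gmet p Xv Xv in
  let e := gmet p (cov X Xuu Xu Xu p) n in
  let f := gmet p (cov X Xuv Xu Xv p) n in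
  let g := gmet p (cov X Xvv Xv Xv p) n in
  (G * e - 2 * F * f + E * g) / (2 * (E * G - F * F)).

Definition translating_soliton_on (U : R -> R -> Prop) (X N : R -> R -> vec) : Prop :=
  immersion_on U X /\ unit_normal_on U X N /\
  forall u v, U u v -> mean_curv X N u v = gmet (X u v) (N u v) dz.

Definition height_local_max (U : R -> R -> Prop) (X : R -> R -> vec) (u0 v0 : R) : Prop :=
  exists r, 0 < r /\ forall u v, U u v -> Rabs (u - u0) < r -> Rabs (v - v0) < r ->
    v3 (X u v) <= v3 (X u0 v0).

(* Main.v *)
Require Import Defs.
From Stdlib Require Import Reals Lra.
From Coquelicot Require Import Coquelicot.
Open Scope R_scope.

Lemma max_deriv0 (f : R -> R) (x l r : R) : 0 < r ->
  (forall h, Rabs h < r -> f (x + h) <= f x) -> derivable_pt_lim f x l -> l = 0.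
Proof.
  intros Hr Hmax Hd.
  destruct (Rtotal_order l 0) as [Hl|[Hl|Hl]]; [|exact Hl|].
  - destruct (Hd (- l) ltac:(lra)) as [[d Hd0] Hdd]. simpl in Hdd.
    set (h := - (Rmin d r) / 2).
    assert (Hm1 : Rmin d r <= d) by apply Rmin_l.
    assert (Hm2 : Rmin d r <= r) by apply Rmin_r.
    assert (Hm3 : 0 < Rmin d r) by (apply Rmin_glb_lt; lra).
    assert (Hh : h < 0) by (unfold h; lra).
    assert (Hah : Rabs h = Rmin d r / 2) by (rewrite Rabs_left; unfold h; lra).
    specialize (Hdd h ltac:(lra) ltac:(lra)).
    specialize (Hmax h ltac:(lra)).
    set (q := (f (x + h) - f x) / h) in *.
    assert (Hq : f (x + h) - f x = q * h) by (unfold q; field; lra).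
    apply Rabs_def2 in Hdd. nra.
  - destruct (Hd l ltac:(lra)) as [[d Hd0] Hdd]. simpl in Hdd.
    set (h := (Rmin d r) / 2).
    assert (Hm1 : Rmin d r <= d) by apply Rmin_l.
    assert (Hm2 : Rmin d r <= r) by apply Rmin_r.
    assert (Hm3 : 0 < Rmin d r) by (apply Rmin_glb_lt; lra).
    assert (Hh : 0 < h) by (unfold h; lra).
    assert (Hah : Rabs h = Rmin d r / 2) by (rewrite Rabs_right; unfold h; lra).
    specialize (Hdd h ltac:(lra) ltac:(lra)).
    specialize (Hmax h ltac:(lra)).
    set (q := (f (x + h) - f x) / h) in *.
    assert (Hq : f (x + h) - f x = q * h) by (unfold q; field; lra).
    apply Rabs_def2 in Hdd. nra.
Qed.

Lemma max_deriv2 (f g : R -> R) (x m r : R) : 0 < r ->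
  (forall h, Rabs h < r -> f (x + h) <= f x) ->
  (forall t, Rabs (t - x) < r -> derivable_pt_lim f t (g t)) ->
  derivable_pt_lim g x m -> m <= 0.
Proof.
  intros Hr Hmax Hf Hg.
  assert (Hg0 : g x = 0).
  { apply (max_deriv0 f x (g x) r Hr Hmax). apply Hf.
    replace (x - x) with 0 by ring. rewrite Rabs_R0; lra. }
  destruct (Rle_or_lt m 0) as [Hm|Hm]; [exact Hm|exfalso].
  destruct (Hg m Hm) as [[d Hd0] Hdd]. simpl in Hdd.
  set (h0 := (Rmin d r) / 2).
  assert (Hm1 : Rmin d r <= d) by apply Rmin_l.
  assert (Hm2 : Rmin d r <= r) by apply Rmin_r.
  assert (Hm3 : 0 < Rmin d r) by (apply Rmin_glb_lt; lra).
  assert (Hh : 0 < h0) by (unfold h0; lra).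
  destruct (MVT_cor2 f g x (x + h0) ltac:(lra)) as [c [Hc1 Hc2]].
  { intros c Hc. apply Hf. rewrite Rabs_right; unfold h0 in *; lra. }
  assert (Hgc : 0 < g c).
  { set (s := c - x).
    assert (Hs : 0 < s) by (unfold s; lra).
    specialize (Hdd s ltac:(lra) ltac:(rewrite Rabs_right; unfold s, h0 in *; lra)).
    replace (x + s) with c in Hdd by (unfold s; ring).
    rewrite Hg0 in Hdd.
    set (q := (g c - 0) / s) in *.
    assert (Hq : g c = q * s) by (unfold q; field; lra).
    apply Rabs_def2 in Hdd. nra. }
  specialize (Hmax h0 ltac:(rewrite Rabs_right; unfold h0 in *; lra)).
  replace (x + h0 - x) with h0 in Hc1 by ring.
  nra.
Qed.

Lemma diff_lem (U : R -> R -> Prop) (f : R -> R -> R) (x y : R) :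
  open2 U -> (forall u v, U u v -> has_partials f u v) -> U x y ->
  cont2 (pd1 f) x y -> cont2 (pd2 f) x y ->
  differentiable_pt_lim f x y (pd1 f x y) (pd2 f x y).
Proof.
  intros HU Hp Hxy C1 C2 eps.
  destruct (HU x y Hxy) as [d0 [Hd0 Hb]].
  destruct (C1 (eps/2) ltac:(destruct eps; simpl; lra)) as [d1 [Hd1 H1]].
  destruct (C2 (eps/2) ltac:(destruct eps; simpl; lra)) as [d2 [Hd2 H2]].
  assert (Hd : 0 < Rmin d0 (Rmin d1 d2)) by (repeat apply Rmin_glb_lt; lra).
  exists (mkposreal _ Hd). simpl. intros u v Hu Hv.
  assert (Hm0 := Rmin_l d0 (Rmin d1 d2)).
  assert (Hm1 := Rmin_l d1 d2). assert (Hm2 := Rmin_r d1 d2).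
  assert (Hm3 := Rmin_r d0 (Rmin d1 d2)).
  destruct (MVT_cor4 (fun s => f s v) (fun s => pd1 f s v) x (Rabs (u - x))) with (b := u)
    as [c1 [Hc1 Hc1']]; [| lra |].
  { intros c Hc. apply Derive_correct. apply (Hp c v). apply Hb; lra. }
  destruct (MVT_cor4 (fun t => f x t) (fun t => pd2 f x t) y (Rabs (v - y))) with (b := v)
    as [c2 [Hc2 Hc2']]; [| lra |].
  { intros c Hc. apply Derive_correct. apply (Hp x c). apply Hb.
    replace (x - x) with 0 by ring. rewrite Rabs_R0; lra. lra. }
  simpl in Hc1, Hc2.
  replace (f u v - f x y - (pd1 f x y * (u - x) + pd2 f x y * (v - y)))
    with ((pd1 f c1 v - pd1 f x y) * (u - x) + (pd2 f x c2 - pd2 f x y) * (v - y))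
    by lra.
  assert (E1 : Rabs (pd1 f c1 v - pd1 f x y) < eps / 2) by (apply H1; lra).
  assert (E2 : Rabs (pd2 f x c2 - pd2 f x y) < eps / 2).
  { apply H2. replace (x - x) with 0 by ring. rewrite Rabs_R0; lra. lra. }
  eapply Rle_trans. apply Rabs_triang. rewrite !Rabs_mult.
  assert (M1 := Rmax_l (Rabs (u - x)) (Rabs (v - y))).
  assert (M2 := Rmax_r (Rabs (u - x)) (Rabs (v - y))).
  assert (P1 := Rabs_pos (u - x)). assert (P2 := Rabs_pos (v - y)).
  assert (P3 := Rabs_pos (pd1 f c1 v - pd1 f x y)).
  assert (P4 := Rabs_pos (pd2 f x c2 - pd2 f x y)).
  destruct eps as [e He]; simpl in *. nra.
Qed.

Lemma cont2_2d f x y : cont2 f x y -> continuity_2d_pt f x y.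
Proof.
  intros H eps. destruct (H eps (cond_pos eps)) as [d [Hd Hd']].
  exists (mkposreal d Hd). simpl. intros u v Hu Hv. apply Hd'; auto.
Qed.

Lemma alg (p n Xu Xv Xuu Xuv Xvv : vec) (zuu zuv zvv : R) :
  0 < v2 p -> v3 Xu = 0 -> v3 Xv = 0 ->
  (v2 Xu * v3 Xv - v3 Xu * v2 Xv, v3 Xu * v1 Xv - v1 Xu * v3 Xv,
      v1 Xu * v2 Xv - v2 Xu * v1 Xv) <> (0, 0, 0) ->
  gmet p n n = 1 -> gmet p n Xu = 0 -> gmet p n Xv = 0 ->
  v3 Xuu = zuu -> v3 Xuv = zuv -> v3 Xvv = zvv -> zvv <= 0 ->
  (forall c, zuu + 2 * c * zuv + c ^ 2 * zvv <= 0) ->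
  (let E := gmet p Xu Xu in let F := gmet p Xu Xv in let G := gmet p Xv Xv in
   let e := gmet p (vadd Xuu (christ p Xu Xu)) n in
   let f := gmet p (vadd Xuv (christ p Xu Xv)) n in
   let g := gmet p (vadd Xvv (christ p Xv Xv)) n in
   (G * e - 2 * F * f + E * g) / (2 * (E * G - F * F))) = gmet p n dz -> False.
Proof.
  destruct p as [[p1 p2] p3], n as [[n1 n2] n3], Xu as [[a1 a2] a3], Xv as [[b1 b2] b3],
    Xuu as [[x1 x2] x3], Xuv as [[y1 y2] y3], Xvv as [[w1 w2] w3].
  unfold gmet, vadd, christ, dz, v1, v2, v3; simpl.
  intros Hp -> -> Hc Nn Na Nb -> -> -> Hvv Hl Hs.
  assert (HD : a1 * b2 - a2 * b1 <> 0).
  { intro h; apply Hc; rewrite h.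
    replace (a2 * 0 - 0 * b2) with 0 by ring; replace (0 * b1 - a1 * 0) with 0 by ring; reflexivity. }
  assert (HK : 0 < p2 * (p2 * 1)) by nra.
  assert (Na' : n1 * a1 + n2 * a2 = 0).
  { replace (n1 * a1 + n2 * a2) with (((n1 * a1 + n2 * a2) / (p2 * (p2 * 1)) + n3 * 0) * (p2 * (p2 * 1))) by (field; lra).
    rewrite Na; ring. }
  assert (Nb' : n1 * b1 + n2 * b2 = 0).
  { replace (n1 * b1 + n2 * b2) with (((n1 * b1 + n2 * b2) / (p2 * (p2 * 1)) + n3 * 0) * (p2 * (p2 * 1))) by (field; lra).
    rewrite Nb; ring. }
  assert (N1 : n1 = 0).
  { assert (h : n1 * (a1 * b2 - a2 * b1) = 0).
    { replace (n1 * (a1 * b2 - a2 * b1)) with (b2 * (n1 * a1 + n2 * a2) - a2 * (n1 * b1 + n2 * b2)) by ring.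
      rewrite Na', Nb'; ring. }
    destruct (Rmult_integral _ _ h); tauto. }
  assert (N2 : n2 = 0).
  { assert (h : n2 * (a1 * b2 - a2 * b1) = 0).
    { replace (n2 * (a1 * b2 - a2 * b1)) with (a1 * (n1 * b1 + n2 * b2) - b1 * (n1 * a1 + n2 * a2)) by ring.
      rewrite Na', Nb'; ring. }
    destruct (Rmult_integral _ _ h); tauto. }
  subst n1 n2.
  assert (N3 : n3 * n3 = 1).
  { rewrite <- Nn. field. lra. }
  set (K := p2 * (p2 * 1)) in *.
  set (D := a1 * b2 - a2 * b1) in *.
  set (Eb := a1 * a1 + a2 * a2). set (Fb := a1 * b1 + a2 * b2). set (Gb := b1 * b1 + b2 * b2).
  set (T := Gb * zuu - 2 * Fb * zuv + Eb * zvv).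
  assert (HD2 : 0 < D * D) by (apply Rsqr_pos_lt in HD; unfold Rsqr in HD; exact HD).
  assert (Hden : 2 * ((Eb / K + 0 * 0) * (Gb / K + 0 * 0) - (Fb / K + 0 * 0) * (Fb / K + 0 * 0))
                 = 2 * (D * D) / (K * K)).
  { unfold Eb, Fb, Gb, D. field. lra. }
  fold Eb Fb Gb in Hs. rewrite Hden in Hs.
  replace ((0 * 0 + 0 * 0) / K + n3 * 1) with n3 in Hs by (field; lra).
  match type of Hs with ?A / _ = _ =>
    assert (HA : A = n3 * T / K) by (unfold T; field; lra) end.
  rewrite HA in Hs.
  assert (HT : T = 2 * (D * D) / K).
  { assert (h : n3 * (n3 * T / K / (2 * (D * D) / (K * K))) = n3 * n3) by (rewrite Hs; ring).
    replace (n3 * (n3 * T / K / (2 * (D * D) / (K * K)))) with ((n3 * n3) * (T * K / (2 * (D * D)))) in h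
      by (field; lra).
    rewrite N3 in h.
    replace T with ((T * K / (2 * (D * D))) * (2 * (D * D) / K)) by (field; lra).
    rewrite <- (Rmult_1_l (T * K / (2 * (D * D)))), h. ring. }
  assert (HG : 0 < Gb).
  { unfold Gb. destruct (Req_dec b1 0), (Req_dec b2 0).
    - exfalso. apply HD. unfold D. subst. ring.
    - nra. - nra. - nra. }
  specialize (Hl (- Fb / Gb)).
  assert (HEG : Eb * Gb - Fb * Fb = D * D) by (unfold Eb, Gb, Fb, D; ring).
  assert (HT2 : T = Gb * (zuu + 2 * (- Fb / Gb) * zuv + (- Fb / Gb) * ((- Fb / Gb) * 1) * zvv) + (D * D) / Gb * zvv).
  { unfold T. rewrite <- HEG. field. lra. }
  assert (P1 : 0 < 2 * (D * D) / K) by (apply Rdiv_lt_0_compat; lra).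
  assert (P2 : (D * D) / Gb * zvv <= 0).
  { assert (0 < D * D / Gb) by (apply Rdiv_lt_0_compat; lra). nra. }
  nra.
Qed.

Theorem proposition5p3 (U : R -> R -> Prop) (X N : R -> R -> vec) :
  open2 U -> translating_soliton_on U X N ->
  forall u0 v0, U u0 v0 -> ~ height_local_max U X u0 v0.
Proof.
  intros HU [[C1 [C2 [C3 [Hpos Hcross]]]] [Hun Hsol]] u0 v0 H0 [r1 [Hr1 Hmax]].
  destruct (HU u0 v0 H0) as [r0 [Hr0 Hb]].
  set (r := Rmin r0 r1).
  assert (Hr : 0 < r) by (apply Rmin_glb_lt; lra).
  assert (Hra := Rmin_l r0 r1). assert (Hrb := Rmin_r r0 r1). fold r in Hra, Hrb.
  set (z := comp3 X).
  assert (Hm : forall u v, Rabs (u - u0) < r -> Rabs (v - v0) < r -> U u v /\ z u v <= z u0 v0).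
  { intros u v Hu Hv. assert (U u v) by (apply Hb; lra). split; auto.
    apply Hmax; auto; lra. }
  assert (R0 : Rabs (u0 - u0) < r) by (replace (u0 - u0) with 0 by ring; rewrite Rabs_R0; lra).
  assert (R0' : Rabs (v0 - v0) < r) by (replace (v0 - v0) with 0 by ring; rewrite Rabs_R0; lra).
  assert (Zu : pd1 z u0 v0 = 0).
  { apply (max_deriv0 (fun s => z s v0) u0 _ r Hr).
    - intros h Hh. apply Hm; [replace (u0 + h - u0) with h by ring; lra | lra].
    - apply is_derive_Reals. apply Derive_correct. apply (C3 u0 v0 H0). }
  assert (Zv : pd2 z u0 v0 = 0).
  { apply (max_deriv0 (fun t => z u0 t) v0 _ r Hr).
    - intros h Hh. apply Hm; [lra | replace (v0 + h - v0) with h by ring; lra].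
    - apply is_derive_Reals. apply Derive_correct. apply (C3 u0 v0 H0). }
  assert (Zvv : pd2 (pd2 z) u0 v0 <= 0).
  { apply (max_deriv2 (fun t => z u0 t) (fun t => pd2 z u0 t) v0 _ r Hr).
    - intros h Hh. apply Hm; [lra | replace (v0 + h - v0) with h by ring; lra].
    - intros t Ht. apply is_derive_Reals. apply Derive_correct. apply (C3 u0 t).
      apply Hm; lra.
    - apply is_derive_Reals. apply Derive_correct. apply (C3 u0 v0 H0). }
  assert (Schw : pd1 (pd2 z) u0 v0 = pd2 (pd1 z) u0 v0).
  { unfold pd1, pd2. apply Schwarz.
    - exists (mkposreal r0 Hr0). simpl. intros u v Hu Hv.
      destruct (C3 u v (Hb u v Hu Hv)) as [[A1 A2] [[A3 A4] [[A5 A6] _]]].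
      repeat split; assumption.
    - apply cont2_2d. apply (C3 u0 v0 H0).
    - apply cont2_2d. apply (C3 u0 v0 H0). }
  assert (Zline : forall c, pd1 (pd1 z) u0 v0 + 2 * c * pd2 (pd1 z) u0 v0
                            + c ^ 2 * pd2 (pd2 z) u0 v0 <= 0).
  { intros c.
    set (r' := r / (1 + Rabs c)).
    assert (Hc0 := Rabs_pos c).
    assert (Hr' : 0 < r') by (unfold r'; apply Rdiv_lt_0_compat; lra).
    assert (Hball : forall t, Rabs t < r' -> Rabs (u0 + t - u0) < r /\ Rabs (v0 + c * t - v0) < r).
    { intros t Ht. replace (u0 + t - u0) with t by ring.
      replace (v0 + c * t - v0) with (c * t) by ring. rewrite Rabs_mult.
      assert (Ht' : Rabs t * (1 + Rabs c) < r).
      { unfold r' in Ht. apply Rmult_lt_reg_r with (/ (1 + Rabs c)).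
        apply Rinv_0_lt_compat; lra. rewrite Rmult_assoc, Rinv_r; lra. }
      assert (P := Rabs_pos t). nra. }
    apply (max_deriv2 (fun t => z (u0 + t) (v0 + c * t))
             (fun t => pd1 z (u0 + t) (v0 + c * t) * 1 + pd2 z (u0 + t) (v0 + c * t) * c)
             0 _ r' Hr').
    - intros h Hh. rewrite Rplus_0_l. replace (u0 + 0) with u0 by ring.
      replace (v0 + c * 0) with v0 by ring. apply Hm; apply Hball; auto.
    - intros t Ht. rewrite Rminus_0_r in Ht. destruct (Hball t Ht) as [B1 B2].
      destruct (Hm _ _ B1 B2) as [Ut _].
      apply (derivable_pt_lim_comp_2d z (fun t => u0 + t) (fun t => v0 + c * t)).
      + apply (diff_lem U); auto. intros u v Huv; apply (C3 u v Huv). apply (C3 _ _ Ut). apply (C3 _ _ Ut).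
      + apply is_derive_Reals. auto_derive; auto; ring.
      + apply is_derive_Reals. auto_derive; auto; ring.
    - assert (Hdp : forall (f : R -> R -> R), (forall u v, U u v -> has_partials f u v) ->
          cont2 (pd1 f) u0 v0 -> cont2 (pd2 f) u0 v0 ->
          is_derive (fun t => f (u0 + t) (v0 + c * t)) 0 (pd1 f u0 v0 * 1 + pd2 f u0 v0 * c)).
      { intros f Hf K1 K2. apply is_derive_Reals.
        apply (derivable_pt_lim_comp_2d f (fun t => u0 + t) (fun t => v0 + c * t)).
        + replace (u0 + 0) with u0 by ring. replace (v0 + c * 0) with v0 by ring.
          apply (diff_lem U); auto.
        + apply is_derive_Reals. auto_derive; auto; ring.
        + apply is_derive_Reals. auto_derive; auto; ring. }
      destruct (C3 u0 v0 H0) as [_ [_ [_ [_ [_ [_ [K11 [K21 [K12 K22]]]]]]]]].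
      assert (DA := Hdp (pd1 z) (fun u v Huv => proj1 (proj2 (C3 u v Huv))) K11 K21).
      assert (DB := Hdp (pd2 z) (fun u v Huv => proj1 (proj2 (proj2 (C3 u v Huv)))) K12 K22).
      assert (DS := is_derive_plus _ _ 0 _ _ (is_derive_scal _ 0 1 _ DA) (is_derive_scal _ 0 c _ DB)).
      apply is_derive_Reals.
      replace (pd1 (pd1 z) u0 v0 + 2 * c * pd2 (pd1 z) u0 v0 + c ^ 2 * pd2 (pd2 z) u0 v0)
        with (plus (1 * (pd1 (pd1 z) u0 v0 * 1 + pd2 (pd1 z) u0 v0 * c))
                   (c * (pd1 (pd2 z) u0 v0 * 1 + pd2 (pd2 z) u0 v0 * c)))
        by (rewrite Schw; unfold plus; simpl; ring).
      eapply is_derive_ext; [|exact DS]. intros t; unfold plus; simpl; ring. }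
  destruct (Hun u0 v0 H0) as [Nn [Na [Nb _]]].
  specialize (Hsol u0 v0 H0). specialize (Hcross u0 v0 H0). specialize (Hpos u0 v0 H0).
  exact (alg (X u0 v0) (N u0 v0) (vpd1 X u0 v0) (vpd2 X u0 v0) (vpd1 (vpd1 X) u0 v0)
    (vpd2 (vpd1 X) u0 v0) (vpd2 (vpd2 X) u0 v0) _ _ _ Hpos Zu Zv Hcross Nn Na Nb
    eq_refl eq_refl eq_refl Zvv Zline Hsol).
Qed.
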